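(* Let $M$ be a Hausdorff space. (a) Every continuous function $f:M\to\mathbb{R}$ induces a continuous spectral family $\sigma_f:\mathbb{R}\to\mathcal{T}(M)$ by $\sigma_f(\lambda):=\mathrm{int}(f^{-1}(]-\infty,\lambda]))$; its admissible domain $\mathcal{D}(\sigma_f)$ equals $M$, and $f_{\sigma_f}=f$. (b) Conversely, if $\sigma:\mathbb{R}\to\mathcal{T}(M)$ is a continuous spectral family, then the induced function $f_\sigma:\mathcal{D}(\sigma)\to\mathbb{R}$ is continuous, and the spectral family $\sigma_{f_\sigma}$ in $\mathcal{T}(\mathcal{D}(\sigma))$ it induces satisfies $\sigma_{f_\sigma}(\lambda)=\sigma(\lambda)\cap\mathcal{D}(\sigma)$ for all $\lambda\in\mathbb{R}$.
   Context: $\mathcal{T}(M)$ is the complete lattice of open subsets of $M$ with $\bigvee_k U_k=\bigcup_k U_k$ and $\bigwedge_k U_k=\mathrm{int}(\bigcap_k U_k)$. A spectral family in $\mathcal{T}(M)$ is a map $\sigma:\mathbb{R}\to\mathcal{T}(M)$ with $\sigma(\lambda)\subseteq\sigma(\mu)$ for $\lambda\le\mu$, $\sigma(\lambda)=\mathrm{int}\bigcap_{\mu>\lambda}\sigma(\mu)$ for all $\lambda$, $\mathrm{int}\bigcap_\lambda\sigma(\lambda)=\emptyset$ and $\bigcup_\lambda\sigma(\lambda)=M$. It is continuous if $\overline{\sigma(\lambda)}\subseteq\sigma(\mu)$ whenever $\lambda<\mu$. The admissible domain is $\mathcal{D}(\sigma):=M\setminus\bigcap_{\lambda}\sigma(\lambda)$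 and the induced function is $f_\sigma(x):=\inf\{\lambda : x\in\sigma(\lambda)\}$ for $x\in\mathcal{D}(\sigma)$; for a function $g$ on a space $N$, $\sigma_g(\lambda):=\mathrm{int}(g^{-1}(]-\infty,\lambda]))$ in $\mathcal{T}(N)$. *)

(* Defs.v *)
From HB Require Import structures.
From mathcomp Require Import all_boot all_order all_algebra.
From mathcomp Require Import all_classical all_reals all_analysis.
Set Implicit Arguments. Unset Strict Implicit. Unset Printing Implicit Defensive.
Import Order.TTheory GRing.Theory Num.Theory.
Import numFieldTopology.Exports numFieldNormedType.Exports.
Local Open Scope classical_set_scope.
Local Open Scope ring_scope.

Section Spectral.
Context {R : realType} {T : topologicalType}.

Definition spectral_family (s : R -> set T) : Prop :=
  [/\ (forall l, open (s l)),
      (forall l m, l <= m -> s l `<=` s m),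
      (forall l, s l = interior (\bigcap_(m in `]l, +oo[) s m)),
      interior (\bigcap_(l in [set: R]) s l) = set0 &
      \bigcup_(l in [set: R]) s l = [set: T]].

Definition continuous_spectral_family (s : R -> set T) : Prop :=
  spectral_family s /\ (forall l m, l < m -> closure (s l) `<=` s m).

Definition adm_domain (s : R -> set T) : set T :=
  ~` \bigcap_(l in [set: R]) s l.

(* induced function f_sigma(x) = inf {l | x \in sigma(l)} (meaningful on D(sigma)) *)
Definition induced_fun (s : R -> set T) (x : T) : R :=
  inf [set l | s l x].

Definition sigma_of (g : T -> R) (l : R) : set T :=
  interior (g @^-1` `]-oo, l]).

End Spectral.

(* Main.v *)
Require Import Defs.
From HB Require Import structures.
From mathcomp Require Import all_boot all_order all_algebra.
From mathcomp Require Import all_classical all_reals all_analysis.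
From mathcomp Require Import lra.
Import Order.TTheory GRing.Theory Num.Theory.
Import numFieldTopology.Exports numFieldNormedType.Exports.
Local Open Scope classical_set_scope.
Local Open Scope ring_scope.

Set Implicit Arguments. Unset Strict Implicit.
Section A.
Context {R : realType} {T : topologicalType}.

Lemma preimE (f : T -> R) l x : (f @^-1` `]-oo, l]) x <-> f x <= l.
Proof. by rewrite /= in_itv /=. Qed.

Lemma le_of_gt (a l : R) : (forall m, l < m -> a <= m) -> a <= l.
Proof. by move=> H; apply/unstable.ler_gtP. Qed.

Lemma near_lt (f : T -> R) x l : continuous f -> f x < l ->
  \forall y \near x, f y < l.
Proof.
move=> cf fl.
have := (cvgrPdist_lt _ _).1 (cf x) (l - f x).
rewrite subr_gt0 => /(_ _ fl); apply: filterS => y.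
rewrite ltr_norml => /andP[h' h]; lra.
Qed.

Lemma near_gt (f : T -> R) x l : continuous f -> l < f x ->
  \forall y \near x, l < f y.
Proof.
move=> cf fl.
have := (cvgrPdist_lt _ _).1 (cf x) (f x - l).
rewrite subr_gt0 => /(_ _ fl); apply: filterS => y.
rewrite ltr_norml => /andP[h' h]; lra.
Qed.

Lemma sig_in (f : T -> R) x l : continuous f -> f x < l -> sigma_of f l x.
Proof.
move=> cf fl; rewrite /sigma_of /interior /=.
move: (near_lt cf fl); apply: filterS => y /ltW yl; exact/preimE.
Qed.

Lemma sig_le (f : T -> R) x l : sigma_of f l x -> f x <= l.
Proof. by move/interior_subset/preimE. Qed.

Lemma partA (f : T -> R) : continuous f ->
  [/\ continuous_spectral_family (sigma_of f),
         adm_domain (sigma_of f) = [set: T] &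
         induced_fun (sigma_of f) = f].
Proof.
move=> cf.
have cap0 : \bigcap_(l in [set: R]) sigma_of f l = set0.
  apply/seteqP; split => // y /= H.
  have := sig_le (H (f y - 1) I); lra.
split; [split; [split|]| |].
- by move=> l; exact: open_interior.
- move=> l m lm; apply: interiorS => y /preimE yl; apply/preimE.
  exact: le_trans lm.
- move=> l; apply/seteqP; split.
    rewrite -open_subsetE; last exact: open_interior.
    move=> y sy m /=; rewrite in_itv /= andbT => lm.
    move: sy; apply: interiorS => z /preimE zl; apply/preimE.
    exact: le_trans (ltW lm).
  apply: interiorS => y H; apply/preimE; apply: le_of_gt => m lm.
  apply: sig_le; apply: H; rewrite /= in_itv /= andbT //.
- by rewrite cap0; apply/seteqP; split => // y /interior_subset.
- apply/seteqP; split => // y _; exists (f y + 1) => //.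
  apply: sig_in => //; lra.
- move=> l m lm y cly; apply: sig_in => //.
  rewrite ltNge; apply/negP => my.
  have fy : l < f y by exact: lt_le_trans my.
  have [z [szl /= lz]] := cly _ (near_gt cf fy).
  have := sig_le szl; lra.
- by rewrite /adm_domain cap0 setC0.
- apply/funext => x; rewrite /induced_fun; apply/eqP; rewrite eq_le; apply/andP; split.
    apply: le_of_gt => m xm; apply: ge_inf.
      by exists (f x) => l /sig_le.
    exact: sig_in.
  apply: lb_le_inf; last by move=> l /sig_le.
  exists (f x + 1); apply: sig_in => //; lra.
Qed.
End A.
Section B.
Context {R : realType} {T : topologicalType}.
Variables (s : R -> set T) (hs : continuous_spectral_family s).
Let D := adm_domain s.

Let op l : open (s l).
Proof. by case: hs => -[] h *; exact: h. Qed.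

Let mono l m : l <= m -> s l `<=` s m.
Proof. by case: hs => -[] _ h _ _ _ _; exact: h. Qed.

Let cont l m : l < m -> closure (s l) `<=` s m.
Proof. by case: hs => _ h; exact: h. Qed.

Let lbD x : D x -> has_lbound [set l | s l x].
Proof.
rewrite /D /adm_domain /= => nx.
have [l0 nl0] : exists l0, ~ s l0 x.
  apply/not_existsP => H; apply: nx => l _; case: (pselect (s l x)) => // nsl; case: (H l nsl).
exists l0 => l slx; rewrite leNgt; apply/negP => ll0.
by apply: nl0; apply: mono (ltW ll0) _ slx.
Qed.

Let neS x : [set l | s l x] !=set0.
Proof.
case: hs => -[] _ _ _ _ hU _.
have : (\bigcup_(l in [set: R]) s l) x by rewrite hU.
by case=> l _ slx; exists l.
Qed.

Lemma fA x l : D x -> s l x -> induced_fun s x <= l.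
Proof. by move=> Dx slx; apply: ge_inf => //; exact: lbD. Qed.

Lemma fB x l : induced_fun s x < l -> s l x.
Proof.
move=> /(inf_lt (neS x)) [m smx ml]; exact: mono (ltW ml) _ smx.
Qed.

Lemma openD : open D.
Proof.
have -> : D = \bigcup_(l in [set: R]) ~` closure (s l).
  apply/seteqP; split => x.
    rewrite /D /adm_domain /= => nx.
    have [l0 nl0] : exists l0, ~ s l0 x.
      apply/not_existsP => H; apply: nx => l _; case: (pselect (s l x)) => // nsl; case: (H l nsl).
    exists (l0 - 1) => //= cx; apply: nl0; apply: cont cx; lra.
  case=> l _ /= ncl H; apply: ncl; apply: subset_closure; exact: H.
apply: bigcup_open => l _; rewrite openC; exact: closed_closure.
Qed.

Let inD (y : set_type D) : D (set_val y).
Proof. exact: set_valP. Qed.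

Let g := fun x : set_type D => induced_fun s (set_val x).

Lemma g_cont : continuous g.
Proof.
move=> x; apply/(@cvgrPdist_lt _ _ _ _ (nbhs_filter x)) => e e0.
set a := g x.
have Dx := @inD x.
rewrite nbhsE /=.
exists (set_val @^-1` (s (a + e / 2) `&` ~` closure (s (a - e / 2)))).
  split.
    exists (s (a + e / 2) `&` ~` closure (s (a - e / 2))) => //.
    apply: openI; first exact: op.
    rewrite openC; exact: closed_closure.
  split.
    apply: fB; rewrite /a /g; lra.
  move=> /(cont (_ : a - e / 2 < a - e / 4)) H.
  have := fA Dx (H ltac:(lra)); rewrite -/(g x) -/a; lra.
move=> y /= [sy ncy].
have h1 := fA (@inD y) sy.
have h2 : ~ (g y < a - e / 2) by move=> /fB h; apply: ncy; exact: subset_closure.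
rewrite -/(g y) in h1; rewrite ltr_norml.
move/negP: h2; rewrite -leNgt => h2.
apply/andP; split; lra.
Qed.

Lemma g_sigma l : sigma_of g l = set_val @^-1` (s l).
Proof.
apply/seteqP; split; last first.
  rewrite /sigma_of -open_subsetE; last by exists (s l) => //; exact: op.
  move=> y /= sy; apply/preimE; exact: fA (@inD y) sy.
move=> y; rewrite /sigma_of /interior /= nbhsE => -[W [[V oV eW] Wy] WS] /=.
case: hs => -[] _ _ hr _ _ _; rewrite hr /interior /= nbhsE.
exists (V `&` D); first split.
- exact: openI oV openD.
- split; last exact: inD.
  by move: Wy; rewrite -eW.
move=> z [Vz Dz] m /=; rewrite in_itv /= andbT => lm.
pose z' : set_type D := exist _ z (mem_set Dz).
have Wz : W z' by rewrite -eW.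
have /preimE := WS _ Wz; rewrite /g /= => gz.
apply: fB; exact: le_lt_trans gz lm.
Qed.

Lemma partB : [/\ continuous g, spectral_family (sigma_of g) &
         forall l : R, sigma_of g l = set_val @^-1` (s l)].
Proof.
split; [exact: g_cont| |exact: g_sigma].
by case: (partA g_cont) => -[].
Qed.
End B.

Theorem theorem2p37 (R : realType) (M : topologicalType) (hM : hausdorff_space M) :
  (forall f : M -> R, continuous f ->
     [/\ continuous_spectral_family (sigma_of f),
         adm_domain (sigma_of f) = [set: M] &
         induced_fun (sigma_of f) = f]) /\
  (forall s : R -> set M, continuous_spectral_family s ->
     let g := fun x : set_type (adm_domain s) => induced_fun s (set_val x) in
     [/\ continuous g,
         spectral_family (sigma_of g) &
         forall l : R, sigma_of g l = set_val @^-1` (s l)]).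
Proof.
split; first by move=> f cf; exact: partA.
by move=> s hs g; exact: partB hs.
Qed.
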